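(* Let $n\ge1$ and let $k_1\le k_2\le\cdots\le k_n$ be integers. Then $$\sum_{A} (-1)^{\#\{\text{special little triangles in }A\}}$$ over all arrowed Gelfand–Tsetlin patterns $A$ with bottom row $k_1,\ldots,k_n$ in which no entry is decorated with the double arrow $\nwarrow\nearrow$, equals the number of Gelfand–Tsetlin patterns with bottom row $k_1,\ldots,k_n$ in which every integer appears at most twice in each row, and whose entries each carry either no decoration or one decoration from $\{\nwarrow,\nearrow\}$, such that: (i) if an entry $a$ equals its $\nearrow$-neighbor then $a$ is not decorated with $\nearrow$, and if $a$ equals its $\nwarrow$-neighbor then $a$ is not decorated with $\nwarrow$; and (ii) whenever two entries in the same row are equal, at least one of them is decorated.
   Context: A Gelfand–Tsetlin pattern with $n$ rows is a triangular array of integers $(a_{i,j})_{1\le j\le i\le n}$, row $i$ being $a_{i,1},\ldots,a_{i,i}$, drawn so that $a_{i-1,j}$ sits between $a_{i,j}$ and $a_{i,j+1}$, satisfying $a_{i+1,j}\le a_{i,j}\le a_{i+1,j+1}$ for all $1\le j\le i<n$. Row $n$ is the bottom row. For an entry $a_{i,j}$: its $\nwarrow$-neighbor is $a_{i-1,j-1}$ and its $\nearrow$-neighbor is $a_{i-1,j}$ (when they exist), its $\swarrow$-neighbor is $a_{i+1,j}$ and its $\searrow$-neighbor is $a_{i+1,j+1}$, and its left/right neighbors are $a_{i,j-1}$, $a_{i,j+1}$. An arrowed Gelfand–Tsetlin pattern is a Gelfand–Tsetlin pattern in which each entry either carries no decoration or carries exactly one decoration from $\{\nwarrow,\nearrow,\nwarrow\nearrow\}$,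 subject to: if an entry $a$ equals its $\nearrow$-neighbor and is decorated with $\nearrow$ or $\nwarrow\nearrow$, then the entry to the right of $a$ in the same row also equals $a$ and is decorated with $\nwarrow$ or $\nwarrow\nearrow$; and if $a$ equals its $\nwarrow$-neighbor and is decorated with $\nwarrow$ or $\nwarrow\nearrow$, then the entry to the left of $a$ in the same row also equals $a$ and is decorated with $\nearrow$ or $\nwarrow\nearrow$. A special little triangle is an entry $a$ that equals both its $\swarrow$-neighbor $b$ and its $\searrow$-neighbor $c$, where $b$ is decorated with $\nearrow$ or $\nwarrow\nearrow$ and $c$ is decorated with $\nwarrow$ or $\nwarrow\nearrow$. *)

(* Defs.v *)
From mathcomp Require Import all_boot all_order all_algebra.
Set Implicit Arguments. Unset Strict Implicit. Unset Printing Implicit Defensive.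
Import Order.TTheory GRing.Theory Num.Theory.
Local Open Scope ring_scope.

(* A (possibly decorated) Gelfand-Tsetlin pattern with n rows is represented by
   - P : seq (seq int), the rows; row i (1-based, 1 <= i <= n) is nth [::] P (i-1)
     and has exactly i entries;
   - D : seq (seq (bool * bool)), of the same shape, the decorations.
   A decoration (nw, ne) is read as: (false,false) = no decoration,
   (true,false) = ↖, (false,true) = ↗, (true,true) = ↖↗.
   So "decorated with ↗ or ↖↗" is the bit ne, "decorated with ↖ or ↖↗" is nw. *)

Definition deco := (bool * bool)%type.
Definition nwb (d : deco) : bool := d.1.
Definition neb (d : deco) : bool := d.2.

Definition ent (P : seq (seq int)) (i j : nat) : int := nth 0 (nth [::] P i.-1) j.-1.
Definition dec (D : seq (seq deco)) (i j : nat) : deco :=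
  nth (false, false) (nth [::] D i.-1) j.-1.

Definition pos (n i j : nat) : Prop := (1 <= j)%N /\ (j <= i)%N /\ (i <= n)%N.

Definition has_shape {T : Type} (n : nat) (P : seq (seq T)) : Prop :=
  size P = n /\ forall i, (i < n)%N -> size (nth [::] P i) = i.+1.

Definition GT (n : nat) (k : seq int) (P : seq (seq int)) : Prop :=
  has_shape n P /\ nth [::] P n.-1 = k /\
  forall i j, (1 <= j)%N -> (j <= i)%N -> (i < n)%N ->
    ent P i.+1 j <= ent P i j /\ ent P i j <= ent P i.+1 j.+1.

Definition arrow_ok (P : seq (seq int)) (D : seq (seq deco)) (i j : nat) : Prop :=
  ((2 <= i)%N -> (j <= i.-1)%N -> ent P i j = ent P i.-1 j -> neb (dec D i j) ->
     (j < i)%N /\ ent P i j.+1 = ent P i j /\ nwb (dec D i j.+1)) /\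
  ((2 <= i)%N -> (2 <= j)%N -> ent P i j = ent P i.-1 j.-1 -> nwb (dec D i j) ->
     ent P i j.-1 = ent P i j /\ neb (dec D i j.-1)).

Definition arrowedGT (n : nat) (k : seq int) (A : seq (seq int) * seq (seq deco)) : Prop :=
  GT n k A.1 /\ has_shape n A.2 /\
  forall i j, pos n i j -> arrow_ok A.1 A.2 i j.

Definition no_double (n : nat) (D : seq (seq deco)) : Prop :=
  forall i j, pos n i j -> ~~ (nwb (dec D i j) && neb (dec D i j)).

Definition special (P : seq (seq int)) (D : seq (seq deco)) (i j : nat) : bool :=
  [&& ent P i j == ent P i.+1 j, ent P i j == ent P i.+1 j.+1,
      neb (dec D i.+1 j) & nwb (dec D i.+1 j.+1)].

Definition num_special (n : nat) (A : seq (seq int) * seq (seq deco)) : nat :=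
  (\sum_(1 <= i < n) \sum_(1 <= j < i.+1) special A.1 A.2 i j)%N.

Definition is_decorated (d : deco) : bool := nwb d || neb d.

Definition second_family (n : nat) (k : seq int) (B : seq (seq int) * seq (seq deco)) : Prop :=
  GT n k B.1 /\ has_shape n B.2 /\ no_double n B.2 /\
  (forall i x, (1 <= i)%N -> (i <= n)%N -> (count_mem x (nth [::] B.1 i.-1) <= 2)%N) /\
  (forall i j, pos n i j ->
     ((2 <= i)%N -> (j <= i.-1)%N -> ent B.1 i j = ent B.1 i.-1 j -> ~~ neb (dec B.2 i j)) /\
     ((2 <= i)%N -> (2 <= j)%N -> ent B.1 i j = ent B.1 i.-1 j.-1 -> ~~ nwb (dec B.2 i j))) /\
  (forall i j1 j2, pos n i j1 -> pos n i j2 -> (j1 < j2)%N -> ent B.1 i j1 = ent B.1 i j2 ->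
     is_decorated (dec B.2 i j1) || is_decorated (dec B.2 i j2)).

(* Main.v *)
Require Import Defs.
From mathcomp Require Import all_boot all_order all_algebra.
From mathcomp Require Import zify.
Import Order.TTheory GRing.Theory Num.Theory.
Set Implicit Arguments. Unset Strict Implicit. Unset Printing Implicit Defensive.
Local Open Scope ring_scope.

Lemma sum_count (T : eqType) (s : seq T) (h : T -> int) (p : pred T) :
  {in s, forall x, h x = (p x)%:Z * 2} ->
  \sum_(x <- s) h x = (count p s)%:Z * 2.
Proof.
elim: s => [|a s IH] H; first by rewrite big_nil.
rewrite big_cons IH; last by move=> x xs; apply: H; rewrite inE xs orbT.
rewrite H ?mem_head //= PoszD mulrDl; congr (_ + _).
Qed.

Lemma invol_sum (T : eqType) (s : seq T) (g : T -> T) (f : T -> int) :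
  uniq s -> {in s, forall x, g x \in s} -> {in s, forall x, g (g x) = x} ->
  {in s, forall x, g x != x -> f (g x) = - f x} ->
  {in s, forall x, g x = x -> f x = 1} ->
  \sum_(x <- s) f x = (count (fun x => g x == x) s)%:Z.
Proof.
move=> us gs gg fn ff.
have pe : perm_eq s (map g s).
  apply: uniq_perm => //.
    rewrite map_inj_in_uniq // => x y xs ys e.
    by rewrite -(gg x xs) e gg.
  move=> x; apply/idP/idP => [xs|/mapP [y ys ->]]; last exact: gs.
  by apply/mapP; exists (g x); [exact: gs | rewrite gg].
have E : \sum_(x <- s) f x = \sum_(x <- s) f (g x).
  by rewrite (perm_big _ pe) big_map.
have E2 : \sum_(x <- s) (f x + f (g x)) = (count (fun x => g x == x) s)%:Z * 2.
  apply: sum_count => x xs.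
  case: eqP => [e|/eqP ne]; first by rewrite e ff.
  by rewrite fn // subrr.
rewrite big_split /= -E in E2.
move: E2; set S := \sum_(x <- s) f x; set c := count _ _.
move=> h; lia.
Qed.

Lemma sum_change (a b j0 : nat) (F G : nat -> nat) :
  (a <= j0 < b)%N -> (forall j, (a <= j < b)%N -> j <> j0 -> F j = G j) ->
  (\sum_(a <= j < b) F j + G j0 = \sum_(a <= j < b) G j + F j0)%N.
Proof.
move=> hj H.
have m : j0 \in index_iota a b by rewrite mem_index_iota.
rewrite (bigD1_seq j0 m (iota_uniq _ _)) (bigD1_seq j0 m (iota_uniq _ _)) /=.
rewrite big_seq_cond [X in (_ = (G j0 + X) + _)%N]big_seq_cond.
rewrite (eq_bigr G); last first.
  move=> j /andP [jm ne]; apply: H; first by rewrite -mem_index_iota.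
  by move/eqP: ne.
by rewrite addnAC [RHS]addnAC [(F j0 + _)%N]addnC.
Qed.
Lemma sign_flip (x y o w : nat) : (x + o = y + w)%N -> odd (o + w) ->
  (-1) ^+ x = - ((-1) ^+ y) :> int.
Proof.
move=> e ow.
have : odd (x + o) = odd (y + w) by rewrite e.
rewrite !oddD -(signr_odd _ x) -(signr_odd _ y).
move: ow; rewrite oddD.
by case: (odd x); case: (odd y); case: (odd o); case: (odd w).
Qed.
Definition Z0 : deco := (false, false).
Definition NW : deco := (true, false).
Definition NE : deco := (false, true).

Definition remap (D : seq (seq deco)) (f : nat -> nat -> deco) : seq (seq deco) :=
  mkseq (fun i => mkseq (fun j => f i.+1 j.+1) (size (nth [::] D i))) (size D).

Lemma dec_remap D f i j : (1 <= i)%N -> (1 <= j)%N ->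
  dec (remap D f) i j =
  if (i.-1 < size D)%N && (j.-1 < size (nth [::] D i.-1))%N then f i j else dec D i j.
Proof.
case: i => // i; case: j => // j _ _ /=.
rewrite /dec /remap /=.
case: (ltnP i (size D)) => hi /=.
  rewrite (nth_mkseq _ _ hi).
  case: (ltnP j (size (nth [::] D i))) => hj /=; first by rewrite nth_mkseq.
  by rewrite nth_default ?size_mkseq // nth_default.
by rewrite (nth_default [::]) ?size_mkseq // (nth_default [::] hi) nth_nil.
Qed.

Lemma remap_shape n D f : has_shape n D -> has_shape n (remap D f).
Proof.
move=> [sD sR]; split; first by rewrite size_mkseq.
move=> i hi; rewrite nth_mkseq ?size_mkseq ?sR //; lia.
Qed.

Lemma shape_ext n (D1 D2 : seq (seq deco)) : has_shape n D1 -> has_shape n D2 ->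
  (forall i j, (1 <= j)%N -> (j <= i)%N -> (i <= n)%N -> dec D1 i j = dec D2 i j) -> D1 = D2.
Proof.
move=> [s1 r1] [s2 r2] H.
apply: (eq_from_nth (x0 := [::])); first by rewrite s1 s2.
move=> i; rewrite s1 => hi.
apply: (eq_from_nth (x0 := Z0)); first by rewrite r1 ?r2.
move=> j; rewrite r1 // => hj.
have := H i.+1 j.+1 erefl hj hi; by [].
Qed.

Definition f3 (D : seq (seq deco)) (i0 j0 : nat) (t : deco * deco * deco) (i j : nat) : deco :=
  let: (a, b, c) := t in
  if (i == i0) && (j == j0) then a
  else if (i == i0) && (j == j0.+1) then b
  else if (i == i0) && (j == j0.+2) then c
  else dec D i j.

Lemma f3_far D i0 j0 t i j : (i <> i0 \/ (j <> j0 /\ j <> j0.+1 /\ j <> j0.+2)) ->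
  f3 D i0 j0 t i j = dec D i j.
Proof.
case: t => [[a b] c] H /=.
have -> : (i == i0) && (j == j0) = false by apply/negbTE/negP => /andP [/eqP ? /eqP ?]; lia.
have -> : (i == i0) && (j == j0.+1) = false by apply/negbTE/negP => /andP [/eqP ? /eqP ?]; lia.
have -> : (i == i0) && (j == j0.+2) = false by apply/negbTE/negP => /andP [/eqP ? /eqP ?]; lia.
by [].
Qed.

Lemma f3_0 D i0 j0 a b c : f3 D i0 j0 (a, b, c) i0 j0 = a.
Proof. by rewrite /= !eqxx. Qed.
Lemma f3_1 D i0 j0 a b c : f3 D i0 j0 (a, b, c) i0 j0.+1 = b.
Proof. by rewrite /= !eqxx -[j0.+1 == j0]/(_) ; case: eqP => // /eqP; rewrite eqn_leq ltnn. Qed.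
Lemma f3_2 D i0 j0 a b c : f3 D i0 j0 (a, b, c) i0 j0.+2 = c.
Proof.
rewrite /= !eqxx.
have -> : (j0.+2 == j0) = false by apply/negbTE/eqP; lia.
have -> : (j0.+2 == j0.+1) = false by apply/negbTE/eqP; lia.
by [].
Qed.
Definition sites (n : nat) : seq (nat * nat) := [seq (i, j) | i <- iota 1 n, j <- iota 1 n].

Lemma mem_sites n i j : ((i, j) \in sites n) = (1 <= i <= n)%N && (1 <= j <= n)%N.
Proof.
apply/allpairsP/idP.
  move=> [[a b] [/= ha hb [-> ->]]]; move: ha hb; rewrite !mem_iota => ha hb.
  apply/andP; split; lia.
move=> /andP [h1 h2]; exists (i, j); rewrite !mem_iota /=; split => //; lia.
Qed.

Definition spick (p : pred (nat * nat)) n := nth (0, 0)%N (sites n) (find p (sites n)).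

Lemma spickP p n : has p (sites n) -> p (spick p n) /\ spick p n \in sites n.
Proof.
move=> h; split; first exact: nth_find.
by apply: mem_nth; rewrite -has_find.
Qed.

Lemma spick_ext p q n : {in sites n, p =1 q} -> spick p n = spick q n.
Proof.
move=> h; rewrite /spick; congr nth; exact: eq_in_find.
Qed.

Lemma has_ext p q n : {in sites n, p =1 q} -> has p (sites n) = has q (sites n).
Proof. exact: eq_in_has. Qed.

Lemma GT_inter n k P i j : GT n k P -> (2 <= i)%N -> (i <= n)%N -> (1 <= j)%N -> (j < i)%N ->
  ent P i j <= ent P i.-1 j /\ ent P i.-1 j <= ent P i j.+1.
Proof.
move=> [_ [_ H]] h2 hn h1 hj.
have := H i.-1 j h1 _ _; rewrite prednK; last by lia.
apply; lia.
Qed.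

Lemma GT_adj n k P i j : GT n k P -> sorted (fun x y : int => x <= y) k ->
  (1 <= i)%N -> (i <= n)%N -> (1 <= j)%N -> (j < i)%N -> ent P i j <= ent P i j.+1.
Proof.
move=> G hs h1 hn hj1 hj.
have [[sP sR] [bot H]] := G.
case: (ltnP i n) => hin.
  have [_ a] := H i j hj1 (ltnW hj) hin.
  have [b _] := H i j.+1 (ltnW hj1) hj hin.
  exact: le_trans a b.
have ein : i = n by lia.
rewrite /ent ein bot.
have n0 : (0 < n)%N by lia.
have hk : size k = n by rewrite -bot sR ?prednK // ltn_predL.
move/(sortedP 0): hs => /(_ j.-1).
rewrite prednK //; apply; by rewrite hk -ein.
Qed.

Lemma GT_mono n k P i j1 j2 : GT n k P -> sorted (fun x y : int => x <= y) k ->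
  (1 <= i)%N -> (i <= n)%N -> (1 <= j1)%N -> (j1 <= j2)%N -> (j2 <= i)%N ->
  ent P i j1 <= ent P i j2.
Proof.
move=> G hs h1 hn hj1 h12 hj2.
have [d e] : exists d, j2 = (j1 + d)%N by exists (j2 - j1)%N; lia.
subst j2; clear h12; elim: d hj2 => [|d IH] hd; first by rewrite addn0.
have h' : (j1 + d <= i)%N by lia.
apply: le_trans (IH h') _.
rewrite addnS; apply: (GT_adj G hs) => //; lia.
Qed.

Definition trip (P : seq (seq int)) (i j : nat) : bool :=
  [&& (1 <= j)%N, (j.+2 <= i)%N, ent P i j == ent P i j.+1 & ent P i j.+1 == ent P i j.+2].

Definition goodA (P : seq (seq int)) (s : nat * nat) : bool :=
  let: (i, j) := s in
  [&& trip P i j, (j == 1%N) || (ent P i.-1 j.-1 != ent P i j)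
    & (j.+2 == i) || (ent P i.-1 j.+2 != ent P i j)].

Lemma trip_goodA n k P i j : GT n k P -> (i <= n)%N -> trip P i j -> has (goodA P) (sites n).
Proof.
move=> G; elim: i j {-2}i (leqnn i) => [|m IH] j i hm hin ht.
  by move: ht => /and4P [_ h _ _]; lia.
case hg: (goodA P (i, j)).
  by apply/hasP; exists (i, j) => //; rewrite mem_sites; move: ht => /and4P [? ? _ _]; lia.
move: ht => /and4P [h1 h2 /eqP e1 /eqP e2].
have [a1 b1] := GT_inter G (i:=i) (j:=j) ltac:(lia) hin h1 ltac:(lia).
have [a2 b2] := GT_inter G (i:=i) (j:=j.+1) ltac:(lia) hin ltac:(lia) ltac:(lia).
have q0 : ent P i.-1 j = ent P i j by apply/eqP; rewrite eq_le a1 andbT e1 b1.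
have q1 : ent P i.-1 j.+1 = ent P i j by apply/eqP; rewrite eq_le e1 a2 andbT e2 b2.
have e2' : ent P i j.+2 = ent P i j by rewrite -e2 e1.
move: hg; rewrite /goodA /trip h1 h2 e1 e2 !eqxx /= => /negbT.
rewrite negb_and !negb_or !negbK.
case/orP => /andP [hn /eqP e]; rewrite -e2 -e1 in e.
  apply: (IH j.-1 i.-1); [lia | lia |].
  rewrite /trip prednK; last by lia.
  rewrite e q0 q1 !eqxx !andbT; apply/andP; split; lia.
apply: (IH j i.-1); [lia | lia |].
rewrite /trip q0 q1 e !eqxx !andbT; apply/andP; split; lia.
Qed.

Definition togg (P : seq (seq int)) (D : seq (seq deco)) (s : nat * nat) : bool :=
  let: (i, j) := s in
  [&& (1 <= j)%N, (j < i)%N, ent P i j == ent P i j.+1 &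
     ((dec D i j == (false, false)) && (dec D i j.+1 == (false, false))) ||
     ((dec D i j == (false, true)) && (dec D i j.+1 == (true, false)))].

Definition tmap (t : deco * deco * deco) : deco * deco * deco :=
  match t with
  | ((false,false),(false,false),(false,false)) => ((false,true),(true,false),(false,false))
  | ((false,true),(true,false),(false,false)) => ((false,false),(false,false),(false,false))
  | ((false,false),(false,false),(false,true)) => ((false,true),(true,false),(false,true))
  | ((false,true),(true,false),(false,true)) => ((false,false),(false,false),(false,true))
  | ((true,false),(false,false),(false,false)) => ((true,false),(false,true),(true,false))
  | ((true,false),(false,true),(true,false)) => ((true,false),(false,false),(false,false))
  | ((true,false),(false,false),(false,true)) => ((false,false),(false,true),(true,false))
  | ((false,false),(false,true),(true,false)) => ((true,false),(false,false),(false,true))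
  | _ => t
  end.

Definition tgl (t : deco * deco * deco) : deco * deco * deco :=
  match t with
  | ((false,false),(false,false),c) => ((false,true),(true,false),c)
  | ((false,true),(true,false),c) => ((false,false),(false,false),c)
  | _ => t
  end.

Definition V3 (t : deco * deco * deco) : bool :=
  let: (a, b, c) := t in
  [&& ~~ (nwb a && neb a), ~~ (nwb b && neb b), ~~ (nwb c && neb c),
      neb a ==> nwb b, neb b ==> nwb c, nwb b ==> neb a & nwb c ==> neb b].

Definition S3 (t : deco * deco * deco) : nat :=
  let: (a, b, c) := t in ((neb a && nwb b) + (neb b && nwb c))%N.

Lemma tmap_props t : V3 t ->
  [/\ V3 (tmap t), tmap (tmap t) = t, tmap t != t & odd (S3 t + S3 (tmap t))].
Proof.
by case: t => [[[[] []] [[] []]] [[] []]].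
Qed.

Definition ntriv (t : deco * deco * deco) : bool :=
  let: (a, b, c) := t in
  ((a == (false,false)) && (b == (false,false))) || ((a == (false,true)) && (b == (true,false))).

Lemma tgl_props t : ntriv t ->
  [/\ ntriv (tgl t), tgl (tgl t) = t, tgl t != t, (tgl t).2 = t.2 &
    odd ((neb t.1.1 && nwb t.1.2) + (neb (tgl t).1.1 && nwb (tgl t).1.2))%N].
Proof.
by case: t => [[[[] []] [[] []]] [[] []]].
Qed.

Lemma tgl_nd t : ~~ (nwb (tgl t).1.1 && neb (tgl t).1.1) = ~~ (nwb t.1.1 && neb t.1.1) \/ ntriv t.
Proof. by case: t => [[[[] []] [[] []]] [[] []]]; auto. Qed.

Definition AOK (P : seq (seq int)) (i j : nat) (dl d dr : deco) : Prop :=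
  ((2 <= i)%N -> (j <= i.-1)%N -> ent P i j = ent P i.-1 j -> neb d ->
     (j < i)%N /\ ent P i j.+1 = ent P i j /\ nwb dr) /\
  ((2 <= i)%N -> (2 <= j)%N -> ent P i j = ent P i.-1 j.-1 -> nwb d ->
     ent P i j.-1 = ent P i j /\ neb dl).

Lemma arrow_okE P D i j : arrow_ok P D i j <-> AOK P i j (dec D i j.-1) (dec D i j) (dec D i j.+1).
Proof. by []. Qed.

Lemma AOK_ext P i j dl d dr dl' dr' : ((2 <= j)%N -> neb dl' = neb dl) -> nwb dr' = nwb dr ->
  AOK P i j dl d dr -> AOK P i j dl' d dr'.
Proof.
move=> hl hr [h1 h2]; split.
  by move=> a b c e; have [? [? ?]] := h1 a b c e; rewrite hr.
by move=> a b c e; have [? ?] := h2 a b c e; rewrite hl.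
Qed.

Definition ns_row (P : seq (seq int)) (D : seq (seq deco)) (i : nat) : nat :=
  (\sum_(1 <= j < i.+1) special P D i j)%N.

Lemma ns_rowE n P D : num_special n (P, D) = (\sum_(1 <= i < n) ns_row P D i)%N.
Proof. by []. Qed.

Lemma ns_rel1 n P D D' i j : (1 <= i)%N -> (i < n)%N -> (1 <= j)%N -> (j <= i)%N ->
  (forall i' j', (1 <= j')%N -> (j' <= i')%N -> (i' < n)%N -> (1 <= i')%N -> (i', j') <> (i, j) ->
     special P D' i' j' = special P D i' j') ->
  (num_special n (P, D') + special P D i j = num_special n (P, D) + special P D' i j)%N.
Proof.
move=> h1 hn hj1 hj H.
rewrite !ns_rowE.
have E1 := @sum_change 1 n i (ns_row P D') (ns_row P D) ltac:(lia).
have E2 := @sum_change 1 i.+1 j (special P D' i) (special P D i) ltac:(lia).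
rewrite -/(ns_row P D' i) -/(ns_row P D i) in E2.
have : (\sum_(1 <= i0 < n) ns_row P D' i0 + ns_row P D i =
       \sum_(1 <= i0 < n) ns_row P D i0 + ns_row P D' i)%N.
  apply: E1 => i' hi' ne; rewrite /ns_row; apply: eq_big_nat => j' hj'.
  congr (nat_of_bool _); apply: H; try lia; case; lia.
have : (ns_row P D' i + special P D i j = ns_row P D i + special P D' i j)%N.
  apply: E2 => j' hj' ne; congr (nat_of_bool _); apply: H; try lia; case; lia.
lia.
Qed.

Lemma ns_rel2 n P D D' i j : (1 <= i)%N -> (i < n)%N -> (1 <= j)%N -> (j < i)%N ->
  (forall i' j', (1 <= j')%N -> (j' <= i')%N -> (i' < n)%N -> (1 <= i')%N ->
     (i', j') <> (i, j) -> (i', j') <> (i, j.+1) ->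
     special P D' i' j' = special P D i' j') ->
  (num_special n (P, D') + (special P D i j + special P D i j.+1) =
   num_special n (P, D) + (special P D' i j + special P D' i j.+1))%N.
Proof.
move=> h1 hn hj1 hj H.
rewrite !ns_rowE.
have E1 := @sum_change 1 n i (ns_row P D') (ns_row P D) ltac:(lia).
pose Hf x := if x == j then special P D i j else special P D' i x.
have E2 := @sum_change 1 i.+1 j (special P D' i) Hf ltac:(lia).
have E3 := @sum_change 1 i.+1 j.+1 Hf (special P D i) ltac:(lia).
rewrite -/(ns_row P D' i) -/(ns_row P D i) in E2 E3.
have : (\sum_(1 <= i0 < n) ns_row P D' i0 + ns_row P D i =
       \sum_(1 <= i0 < n) ns_row P D i0 + ns_row P D' i)%N.
  apply: E1 => i' hi' ne; rewrite /ns_row; apply: eq_big_nat => j' hj'.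
  congr (nat_of_bool _); apply: H; try lia; case; lia.
have : (ns_row P D' i + Hf j = \sum_(1 <= j0 < i.+1) Hf j0 + special P D' i j)%N.
  apply: E2 => j' hj' ne; rewrite /Hf; case: eqP => //.
have : (\sum_(1 <= j0 < i.+1) Hf j0 + special P D i j.+1 = ns_row P D i + Hf j.+1)%N.
  apply: E3 => j' hj' ne; rewrite /Hf; case: eqP => [->|ne2] //; congr (nat_of_bool _); apply: H; try lia; case; lia.
rewrite /Hf eqxx.
have -> : (j.+1 == j) = false by apply/negbTE/eqP; lia.
lia.
Qed.

Ltac natb b := lazymatch b with
  | leq _ _ => idtac
  | @eq_op _ ?x _ => let T := type of x in unify T nat
  | andb ?a ?c => natb a; natb c
  | orb ?a ?c => natb a; natb c
  | negb ?a => natb a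
  | implb ?a ?c => natb a; natb c
  | true => idtac
  | false => idtac
  end.
Ltac natp P := lazymatch P with
  | is_true ?b => natb b
  | @eq bool ?b ?c => natb b; natb c
  | @eq ?T _ _ => unify T nat
  | ~ ?Q => natp Q
  | ?A /\ ?B => natp A; natp B
  | ?A \/ ?B => natp A; natp B
  | False => idtac
  | True => idtac
  end.
Ltac nlia := repeat match goal with
  | H : ?T |- _ => lazymatch type of T with
                   | Prop => tryif natp T then fail else clear H
                   end
  end; lia.

Lemma shape_row n (D : seq (seq deco)) i : has_shape n D -> (1 <= i)%N -> (i <= n)%N ->
  size (nth [::] D i.-1) = i.
Proof. by move=> [_ sR] h1 h2; rewrite sR ?prednK //; nlia. Qed.

Lemma decE_A n D i j t i' j' : has_shape n D -> (1 <= i')%N -> (1 <= j')%N ->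
  (j.+2 <= i)%N -> (i <= n)%N ->
  dec (remap D (f3 D i j t)) i' j' = f3 D i j t i' j'.
Proof.
move=> sh h1 h2 hj hi; rewrite dec_remap //; case: ifP => // h.
symmetry; apply: f3_far.
case: (eqVneq i' i) => [ei|ne]; last by left; apply/eqP.
subst i'; right; move: h; rewrite (shape_row sh h1 hi).
have [sD _] := sh; rewrite sD; nlia.
Qed.

Lemma AO_get n k P D i j : arrowedGT n k (P, D) -> (1 <= j)%N -> (j <= i)%N -> (i <= n)%N ->
  AOK P i j (dec D i j.-1) (dec D i j) (dec D i j.+1).
Proof. by move=> [_ [_ H]] a b c; apply/arrow_okE; apply: H. Qed.

Lemma f3_inv (Q : deco -> Prop) D i j a b c i' j' : Q a -> Q b -> Q c -> Q (dec D i' j') ->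
  Q (f3 D i j (a, b, c) i' j').
Proof. by move=> qa qb qc qd /=; do 3 case: ifP => _ //. Qed.

Lemma caseA n k P D i j : arrowedGT n k (P, D) -> no_double n D -> (i <= n)%N ->
  goodA P (i, j) ->
  let t := (dec D i j, dec D i j.+1, dec D i j.+2) in
  let D' := remap D (f3 D i j (tmap t)) in
  [/\ arrowedGT n k (P, D'), no_double n D', V3 t &
     (-1) ^+ num_special n (P, D') = - ((-1) ^+ num_special n (P, D)) :> int].
Proof.
move=> AG ND hin gA t D'.
have [G [sh AO]] := AG.
move: gA => /and3P [/and4P [hj1 hj2 /eqP e1 /eqP e2] hl hr].
have e2' : ent P i j.+2 = ent P i j by rewrite -e2 e1.
have [a1 b1] := GT_inter G (i:=i) (j:=j) ltac:(nlia) hin hj1 ltac:(nlia).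
have [a2 b2] := GT_inter G (i:=i) (j:=j.+1) ltac:(nlia) hin ltac:(nlia) ltac:(nlia).
have q0 : ent P i.-1 j = ent P i j by apply/eqP; rewrite eq_le a1 andbT e1 b1.
have q1 : ent P i.-1 j.+1 = ent P i j by apply/eqP; rewrite eq_le e1 a2 andbT e2 b2.
have ipos : (2 < i)%N by nlia.
clear a1 b1 a2 b2.
have Vt : V3 t.
  have [p1 _] := AO_get AG hj1 (ltnW (ltnW hj2)) hin.
  have [p2 p3] := AO_get AG (i:=i) (j:=j.+1) erefl (ltnW hj2) hin.
  have [_ p4] := AO_get AG (i:=i) (j:=j.+2) erefl hj2 hin.
  rewrite /t /V3 /=.
  rewrite (ND i j) ?(ND i j.+1) ?(ND i j.+2) /=; try (split; nlia).
  apply/and4P; split.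
  - by apply/implyP => h; have [_ [_ ->]] := p1 ltac:(nlia) ltac:(nlia) (esym q0) h.
  - by apply/implyP => h; have [_ [_ ->]] := p2 ltac:(nlia) ltac:(nlia) ltac:(congruence) h.
  - by apply/implyP => h; have [_ ->] := p3 ltac:(nlia) ltac:(nlia) ltac:(simpl; congruence) h.
  - by apply/implyP => h; have [_ ->] := p4 ltac:(nlia) ltac:(nlia) ltac:(simpl; congruence) h.
have [V' tt2 tne todd] := tmap_props Vt.
move: V' todd; rewrite /D' {D'}.
case E: (tmap t) => [[a' b'] c'] V' todd.
have dE : forall i' j', (1 <= i')%N -> (1 <= j')%N ->
    dec (remap D (f3 D i j (a', b', c'))) i' j' = f3 D i j (a', b', c') i' j'.
  by move=> i' j' h1 h2; apply: (@decE_A n) => //; nlia.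
set D' := remap D (f3 D i j (a', b', c')).
have same : forall i' x, (1 <= i')%N -> (1 <= x)%N ->
    (i' <> i \/ (x <> j /\ x <> j.+1 /\ x <> j.+2)) -> dec D' i' x = dec D i' x.
  by move=> i' x h1 h2 h3; rewrite dE // f3_far.
have d0 : dec D' i j = a' by rewrite dE ?f3_0 //; nlia.
have d1 : dec D' i j.+1 = b' by rewrite dE ?f3_1 //; nlia.
have d2 : dec D' i j.+2 = c' by rewrite dE ?f3_2 //; nlia.
move: (V'); rewrite /V3 => /and5P [nda ndb ndc i1 /and3P [i2 i3 i4]].
have ND' : no_double n D'.
  move=> i' j' [h1 [h2 h3]]; rewrite dE; try nlia.
  apply: (@f3_inv (fun d => is_true (~~ (nwb d && neb d)))) => //.
  apply: ND; split => //.
split; [ | exact: ND' | exact: Vt | ].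
  split; first exact: G.
  split; first exact: remap_shape.
  move=> i' j' [h1 [h2 h3]] /=; apply/arrow_okE.
  have old := AO_get AG h1 h2 h3.
  case: (eqVneq i' i) => [ei | ne]; last first.
    have ne' : i' <> i by apply/eqP.
    rewrite (same i' j'); try nlia.
    apply: AOK_ext old.
      by move=> hj; rewrite same //; nlia.
    by rewrite same //; nlia.
  subst i'.
  case: (boolP ((j'.+1 < j)%N || (j.+3 < j')%N)) => far.
    rewrite (same i j'); try nlia.
    apply: AOK_ext old.
      by move=> hj; rewrite same //; nlia.
    by rewrite same //; nlia.
  have : j'.+1 = j \/ j' = j \/ j' = j.+1 \/ j' = j.+2 \/ j' = j.+3.
    by move: far; rewrite negb_or -!leqNgt; nlia.
  case => [ej|[ej|[ej|[ej|ej]]]].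
  - subst j; split.
      move=> hi2 hle eq hneb; rewrite same in hneb; try nlia.
      have [_ [e _]] := old.1 hi2 hle eq hneb.
      exfalso; move: hl; rewrite /= e -eq eqxx /= orbF; nlia.
    move=> hi2 h2j eq hnw; rewrite same in hnw; try nlia.
    have [e ne] := old.2 hi2 h2j eq hnw; split => //.
    by rewrite same //; nlia.
  - subst j'; rewrite d0 d1; split.
      move=> _ _ _ h; split; first nlia.
      by split; [rewrite -e1 | exact: (implyP i1 h)].
    move=> _ h2j eq _; exfalso.
    by move: hl; rewrite eq eqxx orbF; nlia.
  - subst j'; rewrite d1 d2 /= d0; split.
      move=> _ _ _ h; split; first nlia.
      by split; [rewrite -e2 | exact: (implyP i2 h)].
    move=> _ _ _ h; split; first by [].
    exact: (implyP i3 h).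
  - subst j'; rewrite d2 /= d1; split.
      move=> _ hle eq _; exfalso.
      have hi : (j.+2 == i) = false by apply/negbTE/eqP; nlia.
      by move: hr; rewrite hi -eq e2' eqxx.
    move=> _ _ _ h; split; first by rewrite /= e2.
    exact: (implyP i4 h).
  - subst j'; split.
      move=> hi2 hle eq hneb; rewrite same in hneb; try nlia.
      rewrite same; try nlia.
      exact: old.1 hi2 hle eq hneb.
    move=> hi2 h2j eq hnw; rewrite same in hnw; try nlia.
    have [e _] := old.2 hi2 h2j eq hnw; exfalso.
    have hi : (j.+2 == i) = false by apply/negbTE/eqP; nlia.
    by move: hr; rewrite hi /= -eq -e e2' eqxx.
have spE : forall i' j', (1 <= j')%N -> (j' <= i')%N -> (i' < n)%N -> (1 <= i')%N ->
    (i', j') <> (i.-1, j) -> (i', j') <> (i.-1, j.+1) ->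
    special P D' i' j' = special P D i' j'.
  move=> i' j' h1 h2 h3 h4 n1 n2.
  case: (eqVneq i'.+1 i) => [ei|ne]; last first.
    have ne' : i'.+1 <> i by apply/eqP.
    by rewrite /special !same //; nlia.
  subst i.
  case: (boolP ((j'.+1 < j)%N || (j.+2 < j')%N)) => far.
    by rewrite /special !same //; nlia.
  have n1' : j' <> j by move=> e; apply: n1; rewrite e.
  have n2' : j' <> j.+1 by move=> e; apply: n2; rewrite e.
  have : j'.+1 = j \/ j' = j.+2 by move: far; rewrite negb_or -!leqNgt /=; nlia.
  case => ej.
  - subst j.
    have hf : (ent P i' j' == ent P i'.+1 j'.+1) = false.
      have hn1 : (j'.+1 == 1%N) = false by apply/negbTE/eqP; nlia.
      by move: hl; rewrite hn1 /= => /negbTE.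
    by rewrite /special hf !andbF.
  - subst j'.
    have hf : (ent P i' j.+2 == ent P i'.+1 j.+2) = false.
      have hi : (j.+2 == i'.+1) = false by apply/negbTE/eqP; nlia.
      by move: hr; rewrite hi /= e2'; case: eqP.
    by rewrite /special hf.
have ei : i.-1.+1 = i by nlia.
have hsp := @ns_rel2 n P D D' i.-1 j ltac:(nlia) ltac:(nlia) hj1 ltac:(nlia) spE.
apply: (sign_flip hsp).
have sE : forall DD, special P DD i.-1 j = neb (dec DD i j) && nwb (dec DD i j.+1).
  by move=> DD; rewrite /special ei q0 eqxx -e1 eqxx.
have sE1 : forall DD, special P DD i.-1 j.+1 = neb (dec DD i j.+1) && nwb (dec DD i j.+2).
  by move=> DD; rewrite /special ei q1 e1 eqxx e2 eqxx.
rewrite !sE !sE1 d0 d1 d2.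
by move: todd; rewrite /S3 /t.
Qed.

Lemma ntriv_imp t : ntriv t ->
  [/\ neb t.1.1 -> nwb t.1.2, nwb t.1.2 -> neb t.1.1, nwb t.1.1 = false, neb t.1.2 = false &
      ~~ (nwb t.1.1 && neb t.1.1) && ~~ (nwb t.1.2 && neb t.1.2)].
Proof. by case: t => [[[[] []] [[] []]] [[] []]]. Qed.

Lemma notrip n k P : GT n k P -> ~~ has (goodA P) (sites n) ->
  forall i j, (i <= n)%N -> trip P i j = false.
Proof.
move=> G nh i j hi; apply/negbTE/negP => ht.
by move: nh; rewrite (trip_goodA G hi ht).
Qed.

Lemma caseB n k P D i j : arrowedGT n k (P, D) -> no_double n D -> (i <= n)%N ->
  ~~ has (goodA P) (sites n) -> togg P D (i, j) ->
  let t := (dec D i j, dec D i j.+1, dec D i j.+2) in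
  let D' := remap D (f3 D i j (tgl t)) in
  [/\ arrowedGT n k (P, D'), no_double n D', ntriv t,
     (forall i' x, (1 <= i')%N -> (1 <= x)%N -> (i' <> i \/ (x <> j /\ x <> j.+1)) ->
        dec D' i' x = dec D i' x) &
     (-1) ^+ num_special n (P, D') = - ((-1) ^+ num_special n (P, D)) :> int].
Proof.
move=> AG ND hin nA tg t D'.
have [G [sh AO]] := AG.
have NT := notrip G nA.
move: tg => /and4P [hj1 hji /eqP e1 hd].
have Nt : ntriv t by [].
have [a1 b1] := GT_inter G (i:=i) (j:=j) ltac:(nlia) hin hj1 hji.
have q0 : ent P i.-1 j = ent P i j by apply/eqP; rewrite eq_le a1 andbT e1 b1.
clear a1 b1.
have [Nt' tt2 tne t2 todd] := tgl_props Nt.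
have [o1 o2 o3 o4 o5] := ntriv_imp Nt.
have [n1 n2 n3 n4 n5] := ntriv_imp Nt'.
move: Nt' tt2 tne t2 todd n1 n2 n3 n4 n5; rewrite /D' {D'}.
case E: (tgl t) => [[a' b'] c'] /= Nt' tt2 tne t2 todd n1 n2 n3 n4 n5.
have ec : c' = dec D i j.+2 by rewrite t2.
set D' := remap D (f3 D i j (a', b', c')).
have dE : forall i' x, (1 <= i')%N -> (1 <= x)%N -> dec D' i' x = f3 D i j (a', b', c') i' x.
  move=> i' x h1 h2; rewrite dec_remap //; case: ifP => // h.
  case: (eqVneq i' i) => [ei|ne]; last by rewrite f3_far //; left; apply/eqP.
  subst i'; move: h; rewrite (shape_row sh h1 hin); have [sD _] := sh; rewrite sD => h.
  case: (eqVneq x j.+2) => [ex|nx]; first by rewrite ex f3_2 ec.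
  rewrite f3_far //; right; split; [nlia | split; [nlia | by apply/eqP]].
have same : forall i' x, (1 <= i')%N -> (1 <= x)%N ->
    (i' <> i \/ (x <> j /\ x <> j.+1)) -> dec D' i' x = dec D i' x.
  move=> i' x h1 h2 h3; rewrite dE //.
  case: (eqVneq i' i) => [ei|ne]; last by rewrite f3_far //; left; apply/eqP.
  subst i'; case: (eqVneq x j.+2) => [ex|nx]; first by rewrite ex f3_2 ec.
  rewrite f3_far //; right; split; [nlia | split; [nlia | by apply/eqP]].
have d0 : dec D' i j = a' by rewrite dE ?f3_0 //; nlia.
have d1 : dec D' i j.+1 = b' by rewrite dE ?f3_1 //; nlia.
move: o5 n5 => /andP [o5 o6] /andP [n5 n6].
have ND' : no_double n D'.
  move=> i' x [h1 [h2 h3]].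
  case: (eqVneq i' i) => [ei|ne]; last first.
    rewrite same; [exact: ND | nlia | nlia | left; exact/eqP].
  subst i'; case: (eqVneq x j) => [->|nx]; first by rewrite d0.
  case: (eqVneq x j.+1) => [->|nx1]; first by rewrite d1.
  rewrite same; [exact: ND | nlia | nlia | right; split; exact/eqP].
split => //.
  split; first exact: G.
  split; first exact: remap_shape.
  move=> i' j' [h1 [h2 h3]] /=; apply/arrow_okE.
  have old := AO_get AG h1 h2 h3.
  case: (eqVneq i' i) => [ei | ne]; last first.
    have ne' : i' <> i by apply/eqP.
    rewrite (same i' j'); try nlia.
    apply: AOK_ext old.
      by move=> hj; rewrite same //; nlia.
    by rewrite same //; nlia.
  subst i'.
  case: (boolP ((j'.+1 < j)%N || (j.+2 < j')%N)) => far.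
    rewrite (same i j'); try nlia.
    apply: AOK_ext old.
      by move=> hj; rewrite same //; nlia.
    by rewrite same //; nlia.
  have : j'.+1 = j \/ j' = j \/ j' = j.+1 \/ j' = j.+2.
    by move: far; rewrite negb_or -!leqNgt; nlia.
  case => [ej|[ej|[ej|ej]]].
  - subst j; rewrite (same i j'); try nlia.
    apply: AOK_ext old.
      by move=> hj; rewrite same //; nlia.
    by rewrite d0 n3 o3.
  - subst j'; rewrite d0 d1; split.
      move=> _ _ _ h; split; first nlia.
      by split; [rewrite -e1 | exact: n1].
    by move=> _ _ _ h; rewrite n3 in h.
  - subst j'; rewrite d1 /= d0; split.
      by move=> _ _ _ h; rewrite n4 in h.
    by move=> _ _ _ h; split; [| exact: n2].
  - subst j'; rewrite (same i j.+2); try nlia.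
    apply: AOK_ext old.
      by move=> _ /=; rewrite d1 n4 o4.
    by rewrite same //; nlia.
have spE : forall i' j', (1 <= j')%N -> (j' <= i')%N -> (i' < n)%N -> (1 <= i')%N ->
    (i', j') <> (i.-1, j) -> special P D' i' j' = special P D i' j'.
  move=> i' j' h1 h2 h3 h4 nn.
  case: (eqVneq i'.+1 i) => [ei|ne]; last first.
    have ne' : i'.+1 <> i by apply/eqP.
    by rewrite /special !same //; nlia.
  subst i.
  case: (boolP ((j'.+1 < j)%N || (j.+1 < j')%N)) => far.
    by rewrite /special !same //; nlia.
  have nn' : j' <> j by move=> e; apply: nn; rewrite e.
  have : j'.+1 = j \/ j' = j.+1 by move: far; rewrite negb_or -!leqNgt /=; nlia.
  case => ej.
  - subst j; rewrite /special (same _ j'); try nlia.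
    by rewrite d0 n3 o3.
  - subst j'; rewrite /special (same _ j.+2); try nlia.
    by rewrite d1 n4 o4.
have ei : i.-1.+1 = i by nlia.
have hsp := @ns_rel1 n P D D' i.-1 j ltac:(nlia) ltac:(nlia) hj1 ltac:(nlia) spE.
apply: (sign_flip hsp).
have sE : forall DD, special P DD i.-1 j = neb (dec DD i j) && nwb (dec DD i j.+1).
  by move=> DD; rewrite /special ei q0 eqxx -e1 eqxx.
rewrite !sE d0 d1.
by move: todd; rewrite /t.
Qed.

Lemma decE_B n D i j t i' j' : has_shape n D -> (1 <= i')%N -> (1 <= j')%N ->
  (j < i)%N -> (i <= n)%N -> t.2 = dec D i j.+2 ->
  dec (remap D (f3 D i j t)) i' j' = f3 D i j t i' j'.
Proof.
move=> sh h1 h2 hj hi ec; rewrite dec_remap //; case: ifP => // h.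
case: (eqVneq i' i) => [ei|ne]; last by rewrite f3_far //; left; apply/eqP.
subst i'; move: h; rewrite (shape_row sh h1 hi); have [sD _] := sh; rewrite sD => h.
case: t ec => [[a b] c] ec; rewrite /= in ec.
case: (eqVneq j' j.+2) => [ex|nx]; first by rewrite ex f3_2 ec.
rewrite f3_far //; right; split; [nlia | split; [nlia | by apply/eqP]].
Qed.

Lemma togg_inv n k P D i j : arrowedGT n k (P, D) -> (i <= n)%N ->
  ~~ has (goodA P) (sites n) -> togg P D (i, j) ->
  let t := (dec D i j, dec D i j.+1, dec D i j.+2) in
  forall s, togg P (remap D (f3 D i j (tgl t))) s = togg P D s.
Proof.
move=> AG hin nA tg t [i' j'].
have [G [sh AO]] := AG.
have NT := notrip G nA.
move: (tg) => /and4P [hj1 hji /eqP e1 hd].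
have Nt : ntriv t by [].
have [Nt' tt2 tne t2 todd] := tgl_props Nt.
set D' := remap D _.
have dE : forall i' x, (1 <= i')%N -> (1 <= x)%N -> dec D' i' x = f3 D i j (tgl t) i' x.
  by move=> i2 x h1 h2; apply: (@decE_B n).
move: Nt' dE; case E: (tgl t) => [[a' b'] c'] Nt' dE.
have ec : c' = dec D i j.+2 by move: t2; rewrite E.
have same : forall i' x, (1 <= i')%N -> (1 <= x)%N ->
    (i' <> i \/ (x <> j /\ x <> j.+1)) -> dec D' i' x = dec D i' x.
  move=> i2 x h1 h2 h3; rewrite dE //.
  case: (eqVneq i2 i) => [ei|ne]; last by rewrite f3_far //; left; apply/eqP.
  subst i2; case: (eqVneq x j.+2) => [ex|nx]; first by rewrite ex f3_2 ec.
  rewrite f3_far //; right; split; [nlia | split; [nlia | by apply/eqP]].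
rewrite /togg.
case: (boolP (1 <= j')%N) => hj'; last by [].
case: (boolP (j' < i')%N) => hji'; last by [].
have hi1 : (1 <= i')%N by nlia.
case: (eqVneq i' i) => [ei|ne]; last first.
  have ne' : i' <> i by apply/eqP.
  by rewrite !same //; nlia.
subst i'.
case: (boolP ((j'.+1 < j)%N || (j.+1 < j')%N)) => far.
  by rewrite !same //; nlia.
have : j'.+1 = j \/ j' = j \/ j' = j.+1 by move: far; rewrite negb_or -!leqNgt /=; nlia.
case => [ej|[ej|ej]].
- subst j.
  have -> : (ent P i j' == ent P i j'.+1) = false.
    apply/negbTE/eqP => e; have := NT i j' hin.
    by rewrite /trip hj' hji e e1 !eqxx.
  by [].
- subst j'; rewrite !dE ?f3_0 ?f3_1 //= e1 eqxx /=.
  by move: tg; rewrite /togg hj1 hji e1 eqxx /= => ->; move: Nt'.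
- subst j'.
  have -> : (ent P i j.+1 == ent P i j.+2) = false.
    apply/negbTE/eqP => e; have := NT i j hin.
    by rewrite /trip hj1 hji' e1 e !eqxx.
  by [].
Qed.

Lemma count_le2 (s : seq int) x : sorted (fun a b : int => a <= b) s ->
  (forall j, (j.+2 < size s)%N ->
     ~~ [&& nth 0 s j == x, nth 0 s j.+1 == x & nth 0 s j.+2 == x]) ->
  (count_mem x s <= 2)%N.
Proof.
elim: s => [|a s IH] //= hs H.
have hs' : sorted (fun a b : int => a <= b) s by apply: path_sorted hs.
case: (eqVneq a x) => [ea|na]; last first.
  rewrite add0n; apply: IH => // j hj; exact: (H j.+1).
subst a; rewrite add1n ltnS.
case: s hs hs' H {IH} => [|b s] //= /andP [hxb hp] hs' H.
have allb := order_path_min (@le_trans _ _) hp.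
case: (eqVneq b x) => [eb|nb].
  subst b; rewrite add1n ltnS.
  case: s hp hs' H allb => [|c s] //= /andP [hxc hp'] hs' H /andP [_ allc].
  have ncx : c != x by have := H 0%N erefl; rewrite /= !eqxx.
  have ltc : x < c by rewrite lt_neqAle eq_sym ncx hxc.
  rewrite (negbTE ncx) add0n.
  rewrite leqn0; apply/eqP/count_memPn/negP => hx.
  have := allP (order_path_min (@le_trans _ _) hp') x hx.
  by rewrite leNgt ltc.
suff -> : count_mem x s = 0%N by [].
have ltb : x < b by rewrite lt_neqAle eq_sym nb hxb.
apply/count_memPn/negP => hx.
have := allP allb x hx.
by rewrite leNgt ltb.
Qed.

Lemma count_ge3 (s : seq int) x j : (j.+2 < size s)%N ->
  nth 0 s j = x -> nth 0 s j.+1 = x -> nth 0 s j.+2 = x -> (3 <= count_mem x s)%N.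
Proof.
move=> hj e0 e1 e2.
rewrite -(cat_take_drop j s) count_cat.
have h1 : (j < size s)%N by lia.
have h2 : (j.+1 < size s)%N by lia.
rewrite (drop_nth 0 h1) (drop_nth 0 h2) (drop_nth 0 hj) e0 e1 e2 /= eqxx.
set m := count_mem x (take j s); set m' := count_mem x _.
rewrite /nat_of_bool; lia.
Qed.

Lemma deco_NE (d : deco) : neb d -> ~~ (nwb d && neb d) -> d = (false, true).
Proof. by case: d => [[] []]. Qed.
Lemma deco_NW (d : deco) : nwb d -> ~~ (nwb d && neb d) -> d = (true, false).
Proof. by case: d => [[] []]. Qed.
Lemma deco_Z (d : deco) : ~~ is_decorated d -> d = (false, false).
Proof. by case: d => [[] []]. Qed.

Lemma row_sorted n k P i : GT n k P -> sorted (fun x y : int => x <= y) k ->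
  (1 <= i)%N -> (i <= n)%N -> sorted (fun x y : int => x <= y) (nth [::] P i.-1).
Proof.
move=> G hs h1 h2; apply/(sortedP 0) => m hm.
have [[_ sR] _] := G.
rewrite sR in hm; last by nlia.
have := GT_adj G hs (i := i) (j := m.+1) h1 h2 erefl ltac:(nlia).
by [].
Qed.

Lemma nogood n k P : GT n k P -> ~~ has (goodA P) (sites n) ->
  forall i j, (i <= n)%N -> trip P i j = false.
Proof. exact: notrip. Qed.

Lemma notogg n P D : ~~ has (togg P D) (sites n) ->
  forall i j, (1 <= i)%N -> (i <= n)%N -> (1 <= j)%N -> (j <= n)%N -> togg P D (i, j) = false.
Proof.
move=> nh i j h1 h2 h3 h4; apply/negbTE; move/hasPn: nh; apply.
by rewrite mem_sites; apply/andP; split; apply/andP.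
Qed.

Lemma F1 n k P D : arrowedGT n k (P, D) -> no_double n D -> ~~ has (togg P D) (sites n) ->
  num_special n (P, D) = 0%N.
Proof.
move=> AG ND nT.
rewrite /num_special big_nat_cond big1 // => i' /andP [/andP [hi1 hi2] _].
rewrite big_nat_cond big1 // => j' /andP [/andP [hj1 hj2] _] /=.
apply/eqP; rewrite eqb0; apply/negP => /and4P [/eqP a /eqP b hne hnw].
have := notogg nT (i := i'.+1) (j := j') erefl hi2 hj1 ltac:(nlia).
rewrite /togg hj1 hj2 -a -b eqxx /=.
rewrite (deco_NE hne (ND _ _ _)); last by split; [|split]; nlia.
by rewrite (deco_NW hnw (ND _ _ _)); last by split; [|split]; nlia.
Qed.

Lemma F2 n k P D : sorted (fun x y : int => x <= y) k ->
  arrowedGT n k (P, D) -> no_double n D -> ~~ has (goodA P) (sites n) ->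
  ~~ has (togg P D) (sites n) -> second_family n k (P, D).
Proof.
move=> hs AG ND nA nT.
have [G [sh AO]] := AG.
have NT := notrip G nA.
have NG := notogg nT.
split; first exact: G.
split; first exact: sh.
split; first exact: ND.
split.
  move=> i x h1 h2 /=.
  apply: count_le2; first exact: row_sorted G hs h1 h2.
  move=> m hm.
  have [[_ sR] _] := G.
  rewrite sR in hm; last by nlia.
  have := NT i m.+1 h2; rewrite /trip /ent /=.
  have -> : (m.+3 <= i)%N by nlia.
  move=> T; apply/negP => /and3P [/eqP a /eqP b /eqP c].
  by move: T; rewrite a b c eqxx.
split.
  move=> i j [h1 [h2 h3]] /=; split.
    move=> hi2 hle eq; apply/negP => hne.
    have [_ [e hnw]] := (AO_get AG h1 h2 h3).1 hi2 hle eq hne.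
    have := NG i j ltac:(nlia) h3 h1 ltac:(nlia).
    rewrite /togg h1 e eqxx /=.
    have -> : (j < i)%N by nlia.
    rewrite (deco_NE hne (ND _ _ _)); last by split; [|split]; nlia.
    by rewrite (deco_NW hnw (ND _ _ _)); last by split; [|split]; nlia.
  move=> hi2 hj2 eq; apply/negP => hnw.
  have [e hne] := (AO_get AG h1 h2 h3).2 hi2 hj2 eq hnw.
  have := NG i j.-1 ltac:(nlia) h3 ltac:(nlia) ltac:(nlia).
  rewrite /togg prednK; last by nlia.
  rewrite e eqxx /=.
  have -> : (1 <= j.-1)%N by nlia.
  rewrite h2.
  rewrite (deco_NE hne (ND _ _ _)); last by split; [|split]; nlia.
  by rewrite /= (deco_NW hnw (ND _ _ _)); last by split; [|split]; nlia.
move=> i j1 j2 [a1 [a2 a3]] [b1 [b2 b3]] hlt eq /=.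
apply/negP => /negP; rewrite negb_or => /andP [n1 n2].
case: (eqVneq j2 j1.+1) => [ej|nj].
  subst j2.
  have := NG i j1 ltac:(nlia) a3 a1 ltac:(nlia).
  by rewrite /togg a1 eq eqxx /= (deco_Z n1) (deco_Z n2) eqxx /= andbT; nlia.
have m1 := GT_mono G hs (i := i) (j1 := j1) (j2 := j1.+1) ltac:(nlia) a3 a1 ltac:(nlia) ltac:(nlia).
have m2 := GT_mono G hs (i := i) (j1 := j1.+1) (j2 := j1.+2) ltac:(nlia) a3 ltac:(nlia) ltac:(nlia) ltac:(nlia).
have m3 := GT_mono G hs (i := i) (j1 := j1.+2) (j2 := j2) ltac:(nlia) a3 ltac:(nlia) ltac:(nlia) b2.
have e1 : ent P i j1 = ent P i j1.+1.
  by apply/eqP; rewrite eq_le m1 /= eq (le_trans m2 m3).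
have e2 : ent P i j1.+1 = ent P i j1.+2.
  by apply/eqP; rewrite eq_le m2 /= -e1 eq m3.
have := NT i j1 a3; rewrite /trip a1 e1 e2 !eqxx !andbT.
have -> : (j1.+2 <= i)%N by nlia.
by [].
Qed.

Lemma F3 n k P D : second_family n k (P, D) ->
  [/\ arrowedGT n k (P, D), no_double n D, ~~ has (goodA P) (sites n) &
      ~~ has (togg P D) (sites n)].
Proof.
move=> [G [sh [ND [hc [hi hii]]]]].
split => //.
- split; first exact: G.
  split; first exact: sh.
  move=> i j hp; apply/arrow_okE; have [p1 p2] := hi i j hp; split.
    by move=> a b c d; move: (p1 a b c); rewrite d.
  by move=> a b c d; move: (p2 a b c); rewrite d.
- apply/hasPn => [[i j]]; rewrite mem_sites => /andP [/andP [h1 h2] _].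
  apply/negP => /and3P [/and4P [hj1 hj2 /eqP e1 /eqP e2] _ _].
  have [[_ sR] _] := G.
  have := hc i (ent P i j) h1 h2; rewrite leqNgt => /negP; apply.
  apply: (count_ge3 (j := j.-1)).
  - by rewrite sR; nlia.
  - by [].
  - by rewrite /ent prednK.
  - rewrite /ent prednK //; exact: (etrans (esym e2) (esym e1)).
- apply/hasPn => [[i j]]; rewrite mem_sites => /andP [/andP [h1 h2] _].
  apply/negP => /and4P [hj1 hji /eqP e hd].
  case/orP: hd => /andP [/eqP d1 /eqP d2].
    have := hii i j j.+1 ltac:(split; [|split]; nlia) ltac:(split; [|split]; nlia) (ltnSn _) e.
    by rewrite d1 d2.
  have [a b] := GT_inter G (i:=i) (j:=j) ltac:(nlia) h2 hj1 hji.
  have q : ent P i j = ent P i.-1 j by apply/eqP; rewrite eq_le a /= e b.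
  have [p1 _] := hi i j ltac:(split; [|split]; nlia).
  by have := p1 ltac:(nlia) ltac:(nlia) q; rewrite d1.
Qed.

Definition iota_map n (A : seq (seq int) * seq (seq deco)) : seq (seq int) * seq (seq deco) :=
  let: (P, D) := A in
  if @has (nat * nat) (goodA P) (sites n) then
    let s := spick (goodA P) n in
    (P, remap D (f3 D s.1 s.2 (tmap (dec D s.1 s.2, dec D s.1 s.2.+1, dec D s.1 s.2.+2))))
  else if @has (nat * nat) (togg P D) (sites n) then
    let s := spick (togg P D) n in
    (P, remap D (f3 D s.1 s.2 (tgl (dec D s.1 s.2, dec D s.1 s.2.+1, dec D s.1 s.2.+2))))
  else (P, D).

Lemma f3_back D D' i j t' i' j' :
  (forall i2 j2, (1 <= i2)%N -> (1 <= j2)%N -> dec D' i2 j2 = f3 D i j t' i2 j2) ->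
  (1 <= i')%N -> (1 <= j')%N ->
  f3 D' i j (dec D i j, dec D i j.+1, dec D i j.+2) i' j' = dec D i' j'.
Proof.
move=> H h1 h2; rewrite /= H //.
case: t' H => [[a b] c] H /=.
case: ifP => [/andP [/eqP -> /eqP ->] //|c1].
case: ifP => [/andP [/eqP -> /eqP ->] //|c2].
case: ifP => [/andP [/eqP -> /eqP ->] //|c3].
by rewrite c1 c2 c3.
Qed.

Lemma dec3 D D' i j t' : (1 <= i)%N -> (1 <= j)%N ->
  (forall i2 j2, (1 <= i2)%N -> (1 <= j2)%N -> dec D' i2 j2 = f3 D i j t' i2 j2) ->
  (dec D' i j, dec D' i j.+1, dec D' i j.+2) = t'.
Proof.
move=> h1 h2 H; rewrite !H //; case: t' H => [[a b] c] H.
by rewrite f3_0 f3_1 f3_2.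
Qed.

Arguments f3 : simpl never.
Arguments tmap : simpl never.
Arguments tgl : simpl never.

Lemma key n k P D : sorted (fun x y : int => x <= y) k ->
  arrowedGT n k (P, D) -> no_double n D ->
  let B := iota_map n (P, D) in
  [/\ arrowedGT n k B /\ no_double n B.2, iota_map n B = (P, D),
      (B != (P, D) -> (-1) ^+ num_special n B = - ((-1) ^+ num_special n (P, D)) :> int) &
      (B = (P, D) -> (-1) ^+ num_special n (P, D) = 1 :> int /\ second_family n k (P, D))].
Proof.
move=> hs AG ND B; rewrite /B {B}.
have sh : has_shape n D by have [_ [s _]] := AG.
rewrite /iota_map.
case hA: (has (goodA P) (sites n)).
  have [gA sA] := spickP hA.
  case E: (spick (goodA P) n) => [i j]; rewrite E in gA sA; rewrite /=.
  move: sA; rewrite mem_sites => /andP [/andP [hi1 hin] _].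
  have hji : (j.+2 <= i)%N by move: gA => /and3P [/and4P [_ ? _ _] _ _].
  have hj1 : (1 <= j)%N by move: gA => /and3P [/and4P [? _ _ _] _ _].
  have [AG' ND' Vt sg] := caseA AG ND hin gA.
  have [V' tt2 tne todd] := tmap_props Vt.
  set t := (dec D i j, dec D i j.+1, dec D i j.+2) in AG' ND' sg Vt V' tt2 tne todd *.
  set D' := remap D (f3 D i j (tmap t)) in AG' ND' sg *.
  have dE : forall i2 j2, (1 <= i2)%N -> (1 <= j2)%N -> dec D' i2 j2 = f3 D i j (tmap t) i2 j2.
    by move=> i2 j2 h1 h2; apply: (@decE_A n).
  have e3 := dec3 hi1 hj1 dE.
  have neq : D' <> D.
    by move=> e; move: tne; rewrite -e3 e /t eqxx.
  split => //.
  - rewrite hA /= e3 tt2; congr pair.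
    apply: (shape_ext (remap_shape _ (remap_shape _ sh)) sh) => i' j' h1 h2 h3.
    rewrite (@decE_A n) //; [apply: (f3_back dE); nlia | exact: remap_shape | nlia].
  - by case=> /neq.
case hT: (has (togg P D) (sites n)).
  have [gT sT] := spickP hT.
  case E: (spick (togg P D) n) => [i j]; rewrite E in gT sT; rewrite /=.
  move: sT; rewrite mem_sites => /andP [/andP [hi1 hin] _].
  have nA : ~~ has (goodA P) (sites n) by rewrite hA.
  have hji : (j < i)%N by move: gT => /and4P [_ ? _ _].
  have hj1 : (1 <= j)%N by move: gT => /and4P [? _ _ _].
  have [AG' ND' Nt same sg] := caseB AG ND hin nA gT.
  have [Nt' tt2 tne t2 todd] := tgl_props Nt.
  have TI := togg_inv AG hin nA gT.
  set t := (dec D i j, dec D i j.+1, dec D i j.+2) in AG' ND' sg Nt Nt' tt2 tne t2 todd TI same *.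
  set D' := remap D (f3 D i j (tgl t)) in AG' ND' sg TI same *.
  have dE : forall i2 j2, (1 <= i2)%N -> (1 <= j2)%N -> dec D' i2 j2 = f3 D i j (tgl t) i2 j2.
    by move=> i2 j2 h1 h2; apply: (@decE_B n).
  have e3 := dec3 hi1 hj1 dE.
  have neq : D' <> D.
    by move=> e; move: tne; rewrite -e3 e /t eqxx.
  split => //.
  - rewrite hA (@eq_has _ (togg P D') (togg P D) TI) hT.
    rewrite (@spick_ext (togg P D') (togg P D) n (in1W TI)) E /= e3 tt2; congr pair.
    apply: (shape_ext (remap_shape _ (remap_shape _ sh)) sh) => i' j' h1 h2 h3.
    rewrite (@decE_B n) //; [apply: (f3_back dE); nlia | exact: remap_shape | nlia |].
    by rewrite -[dec D' i j.+2]/((dec D' i j, dec D' i j.+1, dec D' i j.+2).2) e3 t2.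
  - by case=> /neq.
split.
- by split.
- by rewrite /= hA hT.
- by rewrite eqxx.
- move=> _; split; first by rewrite (F1 AG ND) ?hT.
  by apply: F2 => //; rewrite ?hA ?hT.
Qed.

Unset Implicit Arguments.

Theorem proposition2p2 (n : nat) (k : seq int)
  (hn : (1 <= n)%N) (hk : size k = n) (hsort : sorted (fun x y : int => x <= y) k)
  (L1 : seq (seq (seq int) * seq (seq deco)))
  (hL1u : uniq L1)
  (hL1 : forall A, A \in L1 <-> (arrowedGT n k A /\ no_double n A.2))
  (L2 : seq (seq (seq int) * seq (seq deco)))
  (hL2u : uniq L2)
  (hL2 : forall B, B \in L2 <-> second_family n k B) :
  \sum_(A <- L1) (-1) ^+ (num_special n A) = (size L2)%:Z.
Proof.
have K : forall A, A \in L1 ->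
  [/\ iota_map n A \in L1, iota_map n (iota_map n A) = A,
      (iota_map n A != A -> (-1) ^+ num_special n (iota_map n A) = - ((-1) ^+ num_special n A) :> int) &
      (iota_map n A = A -> (-1) ^+ num_special n A = 1 :> int /\ A \in L2)].
  move=> [P D] /hL1 [AG ND].
  have [[AG' ND'] ii sg fx] := key hsort AG ND.
  split => //.
    by apply/hL1; split.
  by move=> e; have [s1 s2] := fx e; split => //; apply/hL2.
rewrite (@invol_sum _ L1 (iota_map n)) //; first last.
- by move=> x /K [_ _ _ h] /h [].
- by move=> x /K [_ _ h _].
- by move=> x /K [_ h _ _].
- by move=> x /K [h _ _ _].
congr Posz.
rewrite -size_filter; apply: perm_size; apply: uniq_perm; [exact: filter_uniq | exact: hL2u |].
move=> [P D]; rewrite mem_filter; apply/andP/idP.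
  by move=> [/eqP e hA]; have [_ _ _ h] := K _ hA; have [_] := h e.
move=> /hL2 /F3 [AG ND nA nT]; split; last by apply/hL1; split.
by rewrite /iota_map (negbTE nA) (negbTE nT).
Qed.
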